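(* Let $1\le p<\infty$, $f\in B_p(D)$, and $\mathcal L_{\mathbf n}f(\mathbf x)=L(f,X_{\mathbf n},\mathbf x)$. If the right-hand side and the left-hand side MZ inequalities associated with $(X_{\mathbf n},\Lambda_{\mathbf n},\Pi_{\mathbf n},\|\cdot\|_p)$ hold with constants $M_1$ and $M_2$, respectively, then $$\|f-\mathcal L_{\mathbf n}f\|_p\le\Big(\frac{M_2}{M_1}+1\Big)\widetilde E(f,\Pi_{\mathbf n})_p.$$
   Context: $D\subset\mathbb R^d$ nonempty; $B(D)$ is the set of real-valued bounded measurable functions on $D$; $B_p(D)$ is a linear subspace of $B(D)$ with a norm $\|\cdot\|_p$. $\Pi_{\mathbf n}\subset B_p(D)$ is a finite-dimensional space of functions on $D$; $X_{\mathbf n}=\{\mathbf x_{\mathbf k}\}_{\mathbf k\in\mathcal I_{\mathbf n}}\subset D$ is a finite set of distinct points; $\Lambda_{\mathbf n}=\{\lambda_{\mathbf k}\}_{\mathbf k\in\mathcal I_{\mathbf n}}$ are positive weights. It is assumed that for every $f\in B(D)$ there is $P\in\Pi_{\mathbf n}$ with $P(\mathbf x_{\mathbf k})=f(\mathbf x_{\mathbf k})$ for all $\mathbf k$; $L(f,X_{\mathbf n},\mathbf x)=\sum_{\mathbf k\in\mathcal I_{\mathbf n}}f(\mathbf x_{\mathbf k})\ell_{\mathbf k}(\mathbf x)$ with $\ell_{\mathbf k}\in\Pi_{\mathbf n}$, $\ell_{\mathbf k}(\mathbf x_{\mathbf l})=\delta_{\mathbf l,\mathbf k}$, and it is assumed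 that $L(P,X_{\mathbf n},\cdot)=P$ for all $P\in\Pi_{\mathbf n}$. Right-hand side MZ inequality with constant $M$: $M(\sum_{\mathbf k}\lambda_{\mathbf k}|P(\mathbf x_{\mathbf k})|^p)^{1/p}\le\|P\|_p$ for all $P\in\Pi_{\mathbf n}$; left-hand side MZ inequality with constant $M$: $\|P\|_p\le M(\sum_{\mathbf k}\lambda_{\mathbf k}|P(\mathbf x_{\mathbf k})|^p)^{1/p}$ for all $P\in\Pi_{\mathbf n}$. Best one-sided approximation: $\widetilde E(f,\Pi_{\mathbf n})_p=\inf\{\|Q-q\|_p:q,Q\in\Pi_{\mathbf n},\ q(\mathbf x)\le f(\mathbf x)\le Q(\mathbf x)\ \forall\mathbf x\in D\}$. *)

(* Defs.v *)
From mathcomp Require Import all_boot all_order all_algebra.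
From mathcomp Require Import all_classical all_reals all_analysis.
Set Implicit Arguments. Unset Strict Implicit. Unset Printing Implicit Defensive.
Import Order.TTheory GRing.Theory Num.Theory.
Import numFieldNormedType.Exports.
Local Open Scope classical_set_scope.
Local Open Scope ring_scope.

Section MZDefs.
Variables (R : realType) (d : nat).
Local Notation pt := 'rV[R]_d.

Definition borel_rV : set (set pt) := <<s [set A : set pt | open A] >>.

Definition measurable_on (D : set pt) (f : pt -> R) : Prop :=
  forall B : set R, measurable B -> borel_rV (D `&` f @^-1` B).

Definition BD (D : set pt) : set (pt -> R) :=
  [set f | measurable_on D f /\ exists M : R, forall x, D x -> `|f x| <= M].

Definition lin_subspace (V : set (pt -> R)) : Prop :=
  V (fun=> 0) /\
  forall (a : R) f g, V f -> V g -> V (fun x => a * f x + g x).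

Definition fin_dim (V : set (pt -> R)) : Prop :=
  exists (m : nat) (b : 'I_m -> (pt -> R)),
    (forall i, V (b i)) /\
    forall f, V f -> exists c : 'I_m -> R,
      forall x, f x = \sum_(i < m) c i * b i x.

(* nrm is a norm on the space V of functions on D (functions agreeing on D
   are identified) *)
Definition norm_on (D : set pt) (V : set (pt -> R)) (nrm : (pt -> R) -> R)
  : Prop :=
  [/\ forall f, V f -> 0 <= nrm f,
      forall f, V f -> nrm f = 0 -> forall x, D x -> f x = 0,
      forall (a : R) f, V f -> nrm (fun x => a * f x) = `|a| * nrm f &
      forall f g, V f -> V g -> nrm (fun x => f x + g x) <= nrm f + nrm g].

Definition monotone_norm (D : set pt) (V : set (pt -> R))
  (nrm : (pt -> R) -> R) : Prop :=
  forall f g, V f -> V g -> (forall x, D x -> `|f x| <= `|g x|) ->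
    nrm f <= nrm g.

Definition Lag (I : finType) (xs : I -> pt) (ell : I -> pt -> R)
  (f : pt -> R) : pt -> R :=
  fun y => \sum_(k : I) f (xs k) * ell k y.

Definition disc_norm (p : R) (I : finType) (xs : I -> pt) (lam : I -> R)
  (P : pt -> R) : R :=
  (\sum_(k : I) lam k * (`|P (xs k)| `^ p)) `^ p^-1.

Definition MZ_right (p : R) (I : finType) (xs : I -> pt) (lam : I -> R)
  (Pi : set (pt -> R)) (nrm : (pt -> R) -> R) (M : R) : Prop :=
  forall P, Pi P -> M * disc_norm p xs lam P <= nrm P.

Definition MZ_left (p : R) (I : finType) (xs : I -> pt) (lam : I -> R)
  (Pi : set (pt -> R)) (nrm : (pt -> R) -> R) (M : R) : Prop :=
  forall P, Pi P -> nrm P <= M * disc_norm p xs lam P.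

(* best one-sided approximation  E~(f, Pi)_p  (an extended real; +oo if
   there is no admissible pair) *)
Definition one_sided_E (D : set pt) (Pi : set (pt -> R))
  (nrm : (pt -> R) -> R) (f : pt -> R) : \bar R :=
  ereal_inf [set e : \bar R | exists q Q : pt -> R,
     [/\ Pi q, Pi Q, (forall x, D x -> q x <= f x <= Q x) &
          e = (nrm (fun x => Q x - q x))%:E]].
End MZDefs.

(* Main.v *)
Require Import Defs.
From mathcomp Require Import all_boot all_order all_algebra.
From mathcomp Require Import all_classical all_reals all_analysis.
Import Order.TTheory GRing.Theory Num.Theory.
Local Open Scope classical_set_scope.
Local Open Scope ring_scope.

Section Helpers.
Variables (R : realType) (d : nat).
Local Notation pt := 'rV[R]_d.

Lemma lin_add (V : set (pt -> R)) f g : lin_subspace V -> V f -> V g ->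
  V (fun x => f x + g x).
Proof.
move=> [_ H] Vf Vg.
have -> : (fun x => f x + g x) = (fun x => 1 * f x + g x).
  by apply: funext => x; rewrite mul1r.
exact: H.
Qed.

Lemma lin_scale (V : set (pt -> R)) a f : lin_subspace V -> V f ->
  V (fun x => a * f x).
Proof.
move=> [H0 H] Vf.
have -> : (fun x => a * f x) = (fun x => a * f x + (fun _ : pt => (0:R)) x).
  by apply: funext => x; rewrite addr0.
exact: H.
Qed.

Lemma lin_sub (V : set (pt -> R)) f g : lin_subspace V -> V f -> V g ->
  V (fun x => f x - g x).
Proof.
move=> HV Vf Vg.
have -> : (fun x => f x - g x) = (fun x => f x + (fun y => (-1) * g y) x).
  by apply: funext => x /=; rewrite mulN1r.
by apply: lin_add => //; apply: lin_scale.
Qed.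

Lemma lin_sum (V : set (pt -> R)) (I : finType) (c : I -> R) (ell : I -> pt -> R) :
  lin_subspace V -> (forall k, V (ell k)) ->
  forall s : seq I, V (fun y => \sum_(k <- s) c k * ell k y).
Proof.
move=> HV Hell; elim => [|a s IH].
  have -> : (fun y => \sum_(k <- [::]) c k * ell k y) = (fun _ : pt => (0:R)).
    by apply: funext => y; rewrite big_nil.
  by case: HV.
have -> : (fun y => \sum_(k <- a :: s) c k * ell k y) =
  (fun y => c a * ell a y + (fun y => \sum_(k <- s) c k * ell k y) y).
  by apply: funext => y; rewrite big_cons.
by case: HV => _ H; apply: H.
Qed.

Lemma nrm_eqD (D : set pt) V nrm f g : monotone_norm D V nrm -> V f -> V g ->
  (forall x, D x -> f x = g x) -> nrm f = nrm g.
Proof.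
move=> Hm Vf Vg Hfg; apply/le_anti/andP; split; apply: Hm => // x Dx;
  by rewrite Hfg.
Qed.

Lemma disc_mono (p : R) (I : finType) (xs : I -> pt) (lam : I -> R) P P' :
  0 < p -> (forall k, 0 < lam k) ->
  (forall k, `|P (xs k)| <= `|P' (xs k)|) ->
  disc_norm p xs lam P <= disc_norm p xs lam P'.
Proof.
move=> p0 hl H; rewrite /disc_norm.
have S0 (F : pt -> R) : 0 <= \sum_(k : I) lam k * (`|F (xs k)| `^ p).
  by apply: sumr_ge0 => k _; rewrite mulr_ge0 ?powR_ge0 ?ltW.
apply: ge0_ler_powR; [by rewrite invr_ge0 ltW|by rewrite nnegrE S0|by rewrite nnegrE S0|].
apply: ler_sum => k _; apply: ler_wpM2l; first exact: ltW.
by apply: ge0_ler_powR; rewrite ?nnegrE //; exact: ltW.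
Qed.

End Helpers.

Theorem theorem2p2 (R : realType) (d : nat) (D : set 'rV[R]_d)
  (Bp : set ('rV[R]_d -> R) ) (nrm : ('rV[R]_d -> R) -> R)
  (Pi : set ('rV[R]_d -> R))
  (I : finType) (xs : I -> 'rV[R]_d) (lam : I -> R) (ell : I -> 'rV[R]_d -> R)
  (p M1 M2 : R) (f : 'rV[R]_d -> R) :
  D !=set0 ->
  Bp `<=` BD D -> lin_subspace Bp ->
  norm_on D Bp nrm -> monotone_norm D Bp nrm ->
  Pi `<=` Bp -> lin_subspace Pi -> fin_dim Pi ->
  injective xs -> (forall k, D (xs k)) -> (forall k, 0 < lam k) ->
  (forall g, BD D g -> exists P, Pi P /\ forall k, P (xs k) = g (xs k)) ->
  (forall k, Pi (ell k)) ->
  (forall k l, ell k (xs l) = (if l == k then 1 else 0)) ->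
  (forall P, Pi P -> forall x, D x -> Lag xs ell P x = P x) ->
  1 <= p ->
  0 < M1 -> 0 < M2 ->
  MZ_right p xs lam Pi nrm M1 ->
  MZ_left p xs lam Pi nrm M2 ->
  Bp f ->
  ((nrm (fun x => f x - Lag xs ell f x))%:E
     <= (M2 / M1 + 1)%:E * one_sided_E D Pi nrm f)%E.
Proof.
move=> _ _ HB [nrm0 _ nrmZ nrmD] Hmon PiB HPi _ _ Dxs hlam _ Hell Hdelta HLP
  p1 M10 M20 MZr MZl Bf.
have p0 : 0 < p by apply: lt_le_trans p1.
have LagPi g : Pi (Lag xs ell g).
  rewrite /Lag; exact: (@lin_sum R d Pi I (fun k => g (xs k)) ell HPi Hell (index_enum I)).
have Lagx g l : Lag xs ell g (xs l) = g (xs l).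
  rewrite /Lag (bigD1 l) //= Hdelta eqxx mulr1 big1 ?addr0 // => k /negbTE kl.
  by rewrite Hdelta eq_sym kl mulr0.
set c := M2 / M1 + 1.
have c0 : 0 < c by rewrite /c addr_gt0 ?divr_gt0.
have key q Q : Pi q -> Pi Q -> (forall x, D x -> q x <= f x <= Q x) ->
    nrm (fun x => f x - Lag xs ell f x) <= c * nrm (fun x => Q x - q x).
  move=> Pq PQ Hqf.
  set g := fun x => f x - q x.
  have Bg : Bp g by apply: lin_sub => //; apply: PiB.
  set h := Lag xs ell g.
  have Bh : Bp h by exact: (PiB _ (LagPi g)).
  have BQq : Bp (fun x => Q x - q x) by apply: lin_sub => //; apply: PiB.
  have PiQq : Pi (fun x => Q x - q x) by apply: lin_sub.
  have Bmh : Bp (fun x => (-1) * h x) by apply: lin_scale.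
  have BfL : Bp (fun x => f x - Lag xs ell f x) by apply: lin_sub => //; apply: PiB.
  have -> : nrm (fun x => f x - Lag xs ell f x) =
            nrm (fun x => g x + (fun y => (-1) * h y) x).
    apply: (@nrm_eqD R d D Bp nrm _ _ Hmon) => //; first by apply: lin_add.
    move=> x Dx /=; rewrite mulN1r /h /g -(HLP q Pq x Dx).
    have -> : Lag xs ell f x = Lag xs ell (fun x => f x - q x) x + Lag xs ell q x.
      by rewrite /Lag -big_split /=; apply: eq_bigr => k _; rewrite -mulrDl subrK.
    by rewrite opprD addrA addrAC.
  apply: le_trans (nrmD _ _ Bg Bmh) _.
  rewrite nrmZ // normrN normr1 mul1r /c mulrDl mul1r [X in _ <= X]addrC.
  apply: lerD.
    apply: Hmon => // x Dx; rewrite /g; move: (Hqf x Dx) => /andP[h1 h2].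
    by rewrite !ger0_norm ?subr_ge0 ?lerB // (le_trans h1 h2).
  apply: le_trans (MZl h (LagPi g)) _.
  have := MZr _ PiQq => HR.
  rewrite -mulrA; apply: (ler_wpM2l (ltW M20)).
  have HR' : disc_norm p xs lam (fun x => Q x - q x) <= M1^-1 * nrm (fun x => Q x - q x).
    by rewrite -(ler_pM2l M10) mulrA mulfV ?gt_eqF // mul1r.
  apply: le_trans HR'.
  apply: disc_mono => // k; rewrite /h Lagx /g.
  move: (Hqf _ (Dxs k)) => /andP[h1 h2].
  by rewrite !ger0_norm ?subr_ge0 ?lerB // (le_trans h1 h2).
set lhs := nrm _.
have -> : (lhs%:E = c%:E * (lhs / c)%:E)%E.
  by rewrite -EFinM mulrC divfK // gt_eqF.
apply: lee_wpmul2l; first by rewrite lee_fin ltW.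
apply: le_ereal_inf_tmp => e [q [Q [Pq PQ Hqf ->]]].
rewrite lee_fin ler_pdivrMr // mulrC; exact: key.
Qed.
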